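(* Let $X$ be a locally compact Hausdorff space, $\zeta$ a quasi-integral on $X$, $O\in\mathcal O(X)$, and $\widehat O=O\cup\{\infty\}$ the one-point compactification of $O$. Let $C_0(\widehat O)=\{f\in C(\widehat O)\mid f(\infty)=0\}$, in which $C_c(O)$ is uniformly dense; since $\zeta|_{C_c(O)}$ is Lipschitz, it has a unique Lipschitz extension $\widehat\zeta_O$ to $C_0(\widehat O)$. For general $f\in C(\widehat O)$ set $\widehat\zeta_O(f)=\widehat\zeta_O(f-f(\infty))+\lambda_O f(\infty)$, where $\lambda_O=\sup\{\zeta(g)\mid g\in C_c(O),\ g\le\mathbf 1_O\}$. Then $\widehat\zeta_O:C(\widehat O)\to\mathbb R$ is a quasi-integral on the compact space $\widehat O$; more precisely it is monotone, Lipschitz, and linear on every subspace $\{\phi\circ f\mid\phi\in C(\mathbb R)\}$, $f\in C(\widehat O)$.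
   Context: $C_c(X)$ denotes real-valued continuous functions with compact support, with the uniform norm; $\mathbf 1_A$ is an indicator function; $\mathcal O(X)$ is the family of open subsets of $X$ with compact closure. A quasi-integral on a locally compact Hausdorff space $X$ is a functional $\eta:C_c(X)\to\mathbb R$ such that: (i) $\eta(f)\le\eta(g)$ whenever $f\le g$; (ii) for every compact $K\subset X$ there is $N_K\ge0$ with $|\eta(f)-\eta(g)|\le N_K\|f-g\|$ for all $f,g$ supported in $K$; (iii) for every $f\in C_c(X)$, $\eta$ is linear on $\{\phi\circ f\mid \phi\in C(\mathbb R),\ \phi(0)=0\}$. *)

(* Defs.v *)
From Stdlib Require Import Reals List ClassicalEpsilon.
Open Scope R_scope.

Section Topo.
Context {X : Type}.

Definition is_topology (T : (X -> Prop) -> Prop) : Prop :=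
  T (fun _ => True) /\ T (fun _ => False) /\
  (forall U V, T U -> T V -> T (fun x => U x /\ V x)) /\
  (forall F : (X -> Prop) -> Prop, (forall U, F U -> T U) ->
      T (fun x => exists U, F U /\ U x)).

Definition compactT (T : (X -> Prop) -> Prop) (K : X -> Prop) : Prop :=
  forall F : (X -> Prop) -> Prop, (forall U, F U -> T U) ->
    (forall x, K x -> exists U, F U /\ U x) ->
    exists l : list (X -> Prop), (forall U, In U l -> F U) /\
      (forall x, K x -> exists U, In U l /\ U x).

Definition hausdorff (T : (X -> Prop) -> Prop) : Prop :=
  forall x y, x <> y -> exists U V, T U /\ T V /\ U x /\ V y /\
    (forall z, U z -> V z -> False).

Definition closureT (T : (X -> Prop) -> Prop) (A : X -> Prop) : X -> Prop :=
  fun x => forall U, T U -> U x -> exists y, U y /\ A y.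

Definition locally_compact (T : (X -> Prop) -> Prop) : Prop :=
  forall x, exists U, T U /\ U x /\ compactT T (closureT T U).

Definition supported_in (f : X -> R) (K : X -> Prop) : Prop :=
  forall x, ~ K x -> f x = 0.
End Topo.

Definition open_R (U : R -> Prop) : Prop :=
  forall x, U x -> exists eps, eps > 0 /\ forall y, Rabs (y - x) < eps -> U y.

Definition continuousT {X Y : Type} (TX : (X -> Prop) -> Prop)
  (TY : (Y -> Prop) -> Prop) (f : X -> Y) : Prop :=
  forall V, TY V -> TX (fun x => V (f x)).

Definition Cc {X : Type} (T : (X -> Prop) -> Prop) (f : X -> R) : Prop :=
  continuousT T open_R f /\ exists K, compactT T K /\ supported_in f K.

Definition quasi_integral {X : Type} (T : (X -> Prop) -> Prop)
  (eta : (X -> R) -> R) : Prop :=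
  (forall f g, Cc T f -> Cc T g -> (forall x, f x <= g x) -> eta f <= eta g) /\
  (forall K, compactT T K -> exists N, 0 <= N /\
     forall f g, Cc T f -> Cc T g -> supported_in f K -> supported_in g K ->
     forall c, (forall x, Rabs (f x - g x) <= c) -> Rabs (eta f - eta g) <= N * c) /\
  (forall f, Cc T f -> forall p q : R -> R,
     continuousT open_R open_R p -> continuousT open_R open_R q -> p 0 = 0 -> q 0 = 0 ->
     forall a b, eta (fun x => a * p (f x) + b * q (f x)) =
                 a * eta (fun x => p (f x)) + b * eta (fun x => q (f x))).

(* one-point compactification of an open O : points Some x (x in O) and None = infinity *)
Definition Ohat {X : Type} (O : X -> Prop) : Type := option {x : X | O x}.

Definition ohat_open {X : Type} (T : (X -> Prop) -> Prop) (O : X -> Prop)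
  (W : Ohat O -> Prop) : Prop :=
  T (fun x => exists h : O x, W (Some (exist _ x h))) /\
  (W None -> compactT T (fun x => exists h : O x, ~ W (Some (exist _ x h)))).

(* C_c(O), viewed inside C_c(X) *)
Definition Cc_in {X : Type} (T : (X -> Prop) -> Prop) (O : X -> Prop) (g : X -> R) : Prop :=
  Cc T g /\ exists K, compactT T K /\ (forall x, K x -> O x) /\ supported_in g K.

(* g in C_c(O) as an element of C_0(Ohat) *)
Definition extend {X : Type} (O : X -> Prop) (g : X -> R) : Ohat O -> R :=
  fun p => match p with Some x => g (proj1_sig x) | None => 0 end.

(* the extension by continuity of zeta|C_c(O) to C_0(Ohat): the limit of zeta(g)
   as g in C_c(O) tends uniformly to f *)
Definition zeta0 {X : Type} (T : (X -> Prop) -> Prop) (zeta : (X -> R) -> R)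
  (O : X -> Prop) (f : Ohat O -> R) : R :=
  epsilon (inhabits 0) (fun r => forall eps, eps > 0 -> exists delta, delta > 0 /\
    forall g, Cc_in T O g -> (forall p, Rabs (extend O g p - f p) <= delta) ->
      Rabs (zeta g - r) <= eps).

Definition lambdaO {X : Type} (T : (X -> Prop) -> Prop) (zeta : (X -> R) -> R)
  (O : X -> Prop) : R :=
  epsilon (inhabits 0) (is_lub (fun r => exists g, Cc_in T O g /\
     (forall x, O x -> g x <= 1) /\ (forall x, ~ O x -> g x <= 0) /\ r = zeta g)).

Definition zeta_hat {X : Type} (T : (X -> Prop) -> Prop) (zeta : (X -> R) -> R)
  (O : X -> Prop) (f : Ohat O -> R) : R :=
  zeta0 T zeta O (fun p => f p - f None) + lambdaO T zeta O * f None.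

(* Main.v *)
Require Import Defs.
From Stdlib Require Import Reals Lra List ClassicalEpsilon ProofIrrelevance FunctionalExtensionality PropExtensionality.
Open Scope R_scope.

Ltac rsplit := unfold Rmax, Rmin, Rabs in *;
  repeat match goal with
  | |- context [Rle_dec ?a ?b] => destruct (Rle_dec a b)
  | |- context [Rcase_abs ?a] => destruct (Rcase_abs a)
  | H : context [Rle_dec ?a ?b] |- _ => destruct (Rle_dec a b)
  | H : context [Rcase_abs ?a] |- _ => destruct (Rcase_abs a)
  end; try lra.

Definition clampd (d t : R) := Rmax (-d) (Rmin d t).
Definition phid (d t : R) := t - clampd d t.
Definition sig (d t : R) := 2 * phid d t - phid (2*d) t.
Definition rpos (t : R) := Rmax t 0.
Definition rneg (t : R) := Rmax (-t) 0.
Definition theta (d t : R) := Rmax 0 (Rmin 1 (Rabs t / d - 1)).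

Lemma sig_zero d t : 0 < d -> Rabs t <= d -> sig d t = 0.
Proof. intros. unfold sig, phid, clampd. rsplit. Qed.
Lemma sig_id d t : 0 < d -> 2*d <= Rabs t -> sig d t = t.
Proof. intros. unfold sig, phid, clampd. rsplit. Qed.
Lemma sig_abs d t : 0 < d -> Rabs (sig d t) <= Rabs t.
Proof. intros. unfold sig, phid, clampd. rsplit. Qed.
Lemma sig_close d t : 0 < d -> Rabs (sig d t - t) <= d.
Proof. intros. unfold sig, phid, clampd. rsplit. Qed.
Lemma sig_lip d a b : 0 < d -> Rabs (sig d a - sig d b) <= 3 * Rabs (a - b).
Proof. intros. unfold sig, phid, clampd. rsplit. Qed.
Lemma theta_bounds d t : 0 <= theta d t <= 1.
Proof. unfold theta. rsplit. Qed.
Lemma theta_zero d t : 0 < d -> Rabs t <= d -> theta d t = 0.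
Proof. intros. unfold theta.
  assert (Rabs t / d <= 1). { apply Rmult_le_reg_r with d; auto. unfold Rdiv. rewrite Rmult_assoc, Rinv_l; lra. }
  revert H1. generalize (Rabs t / d). intros. rsplit. Qed.
Lemma theta_one d t : 0 < d -> 2 * d <= Rabs t -> theta d t = 1.
Proof. intros. unfold theta.
  assert (2 <= Rabs t / d). { apply Rmult_le_reg_r with d; auto. unfold Rdiv. rewrite Rmult_assoc, Rinv_l; lra. }
  revert H1. generalize (Rabs t / d). intros. rsplit. Qed.
Lemma theta_lip d a b : 0 < d -> Rabs (theta d a - theta d b) <= / d * Rabs (a - b).
Proof. intros. unfold theta.
  assert (Rabs (Rabs a / d - Rabs b / d) <= / d * Rabs (a - b)).
  { unfold Rdiv. rewrite <- Rmult_minus_distr_r, Rabs_mult, (Rabs_right (/d)) by (left; apply Rinv_0_lt_compat; auto).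
    rewrite Rmult_comm. apply Rmult_le_compat_l. left; apply Rinv_0_lt_compat; auto.
    apply Rabs_triang_inv2. }
  revert H0. generalize (Rabs a / d) (Rabs b / d). intros. rsplit. Qed.
Lemma rpos_lip a b : Rabs (rpos a - rpos b) <= 1 * Rabs (a - b).
Proof. unfold rpos. rsplit. Qed.
Lemma rneg_lip a b : Rabs (rneg a - rneg b) <= 1 * Rabs (a - b).
Proof. unfold rneg. rsplit. Qed.

Lemma key_mono a b d dl : 0 < dl -> 0 <= d -> a <= b + d ->
  sig (2*dl) a <= sig (2*dl) b + d * Rmax (theta dl a) (theta dl b) + 4 * dl.
Proof. intros Hdl Hd Hab.
  destruct (Rle_dec (2*dl) (Rabs a)) as [Ha|Ha].
  - rewrite (theta_one dl a) by lra.
    assert (Rmax 1 (theta dl b) = 1) by (generalize (theta_bounds dl b); rsplit).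
    rewrite H. generalize (sig_close (2*dl) a) (sig_close (2*dl) b); intros; rsplit.
  - destruct (Rle_dec (2*dl) (Rabs b)) as [Hb|Hb].
    + rewrite (theta_one dl b) by lra.
      assert (Rmax (theta dl a) 1 = 1) by (generalize (theta_bounds dl a); rsplit).
      rewrite H. generalize (sig_close (2*dl) a) (sig_close (2*dl) b); intros; rsplit.
    + rewrite (sig_zero _ a), (sig_zero _ b) by lra.
      generalize (theta_bounds dl a) (theta_bounds dl b). intros.
      assert (0 <= Rmax (theta dl a) (theta dl b)) by rsplit.
      assert (0 <= d * Rmax (theta dl a) (theta dl b)) by (apply Rmult_le_pos; lra). lra.
Qed.

Lemma le_eps x y C : (forall e, e > 0 -> x <= y + C * e) -> x <= y.
Proof. intros H. destruct (Rle_dec x y) as [h|h]; auto. exfalso.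
  assert (HC: 0 <= Rabs C) by apply Rabs_pos.
  set (e := (x - y) / (2 * (Rabs C + 1))).
  assert (He : e > 0). { unfold e. apply Rdiv_lt_0_compat; lra. }
  specialize (H e He). assert (C * e <= Rabs C * e) by (apply Rmult_le_compat_r; [lra| apply Rle_abs]).
  assert (Rabs C * e < x - y). { unfold e. unfold Rdiv.
    rewrite <- Rmult_assoc. apply Rmult_lt_reg_r with (2 * (Rabs C + 1)). lra.
    rewrite Rmult_assoc, Rinv_l by lra. nra. } lra.
Qed.

Section Topo2.
Context {X : Type} (T : (X -> Prop) -> Prop) (HT : is_topology T).

Lemma onb (S : X -> Prop) :
  (forall x, S x -> exists U, T U /\ U x /\ forall y, U y -> S y) -> T S.
Proof. intros H. destruct HT as (_ & _ & _ & Hu).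
  assert (E : S = fun x => exists U, (T U /\ forall y, U y -> S y) /\ U x).
  { extensionality x. apply propositional_extensionality. split.
    - intros Sx. destruct (H x Sx) as (U & HU & Ux & HUS). exists U; tauto.
    - intros (U & (_ & HUS) & Ux). auto. }
  rewrite E. apply Hu. tauto.
Qed.

Lemma T_inter U V : T U -> T V -> T (fun x => U x /\ V x).
Proof. destruct HT as (_ & _ & Hi & _). auto. Qed.
Lemma T_full : T (fun _ => True).
Proof. destruct HT as (H & _). auto. Qed.

Lemma hc (Hh : hausdorff T) K : compactT T K -> T (fun x => ~ K x).
Proof. intros HK. apply onb. intros y Hy.
  set (Fam := fun U => T U /\ exists V, T V /\ V y /\ forall z, U z -> V z -> False).
  destruct (HK Fam) as (l & Hl & Hcov).
  - intros U [HU _]; auto.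
  - intros x Kx. assert (x <> y) by (intro; subst; auto).
    destruct (Hh x y H) as (U & V & HU & HV & Ux & Vy & Hd).
    exists U. split; auto. split; auto. exists V; auto.
  - assert (exists V, T V /\ V y /\ forall U, In U l -> forall z, U z -> V z -> False) as (V & HV & Vy & HVd).
    { clear Hcov. induction l as [|U l IH].
      - exists (fun _ => True). split; [apply T_full|]. split; [exact I|]. intros U0 [].
      - destruct IH as (V & HV & Vy & HVd). { intros; apply Hl; simpl; auto. }
        destruct (Hl U (or_introl eq_refl)) as (_ & V' & HV' & V'y & Hd').
        exists (fun x => V x /\ V' x). split. apply T_inter; auto. split; auto.
        intros U0 [<-|HU0] z Uz [Vz V'z]. eauto. eauto. }
    exists V. split; auto. split; auto. intros z Vz Kz.
    destruct (Hcov z Kz) as (U & HU & Uz). eauto.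
Qed.

Lemma compact_union K1 K2 : compactT T K1 -> compactT T K2 -> compactT T (fun x => K1 x \/ K2 x).
Proof. intros H1 H2 F HF Hc.
  destruct (H1 F HF) as (l1 & Hl1 & Hc1). intros; apply Hc; auto.
  destruct (H2 F HF) as (l2 & Hl2 & Hc2). intros; apply Hc; auto.
  exists (l1 ++ l2). split.
  - intros U HU. apply in_app_or in HU. destruct HU; auto.
  - intros x [Kx|Kx].
    + destruct (Hc1 x Kx) as (U & ? & ?). exists U. split; auto. apply in_or_app; auto.
    + destruct (Hc2 x Kx) as (U & ? & ?). exists U. split; auto. apply in_or_app; auto.
Qed.

Lemma compact_empty : compactT T (fun _ => False).
Proof. intros F _ _. exists nil. split. intros U []. intros x []. Qed.

Lemma cont_const c : continuousT T open_R (fun _ => c).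
Proof. intros V HV. destruct (classic (V c)) as [h|h].
  - replace (fun _ : X => V c) with (fun _ : X => True). apply T_full.
    extensionality x. apply propositional_extensionality; tauto.
  - replace (fun _ : X => V c) with (fun _ : X => False). destruct HT as (_ & H & _); auto.
    extensionality x. apply propositional_extensionality; tauto.
Qed.

End Topo2.

Lemma ball_open c e : open_R (fun t => Rabs (t - c) < e).
Proof. intros x Hx. exists (e - Rabs (x - c)). split. lra.
  intros y Hy. replace (y - c) with ((y - x) + (x - c)) by ring.
  generalize (Rabs_triang (y - x) (x - c)). lra. Qed.

Lemma comp_cont {A B C : Type} TA TB TC (f : A -> B) (g : B -> C) :
  continuousT TA TB f -> continuousT TB TC g -> continuousT TA TC (fun x => g (f x)).
Proof. intros Hf Hg V HV. apply (Hf _ (Hg V HV)). Qed.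

Lemma lip_cont (psi : R -> R) L : 0 <= L -> (forall a b, Rabs (psi a - psi b) <= L * Rabs (a - b)) ->
  continuousT open_R open_R psi.
Proof. intros HL H V HV x Hx. destruct (HV _ Hx) as (e & He & HVe).
  exists (e / (L + 1)). split. apply Rdiv_lt_0_compat; lra.
  intros y Hy. apply HVe. eapply Rle_lt_trans. apply H.
  apply Rle_lt_trans with ((L+1) * Rabs (y - x)). apply Rmult_le_compat_r. apply Rabs_pos. lra.
  apply Rmult_lt_reg_r with (/ (L+1)). apply Rinv_0_lt_compat; lra.
  replace ((L + 1) * Rabs (y - x) * / (L + 1)) with (Rabs (y - x)) by (field; lra). exact Hy.
Qed.

Lemma cont2 {X : Type} (T : (X -> Prop) -> Prop) (HT : is_topology T) (k w : X -> R) (Phi : R -> R -> R) L :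
  continuousT T open_R k -> continuousT T open_R w -> 0 <= L ->
  (forall a b a' b', Rabs (Phi a b - Phi a' b') <= L * (Rabs (a - a') + Rabs (b - b'))) ->
  continuousT T open_R (fun x => Phi (k x) (w x)).
Proof. intros Hk Hw HL HP V HV. apply onb; auto. intros x Hx.
  destruct (HV _ Hx) as (e & He & HVe).
  set (eta := e / (2 * L + 1)).
  assert (Heta : eta > 0) by (apply Rdiv_lt_0_compat; lra).
  exists (fun y => Rabs (k y - k x) < eta /\ Rabs (w y - w x) < eta). split.
  apply T_inter; auto. apply (Hk _ (ball_open _ _)). apply (Hw _ (ball_open _ _)).
  split. split; replace (_ - _) with 0 by ring; rewrite Rabs_R0; lra.
  intros y [H1 H2]. apply HVe. eapply Rle_lt_trans. apply HP.
  apply Rle_lt_trans with (L * (2 * eta)). apply Rmult_le_compat_l; lra.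
  unfold eta. apply Rmult_lt_reg_r with (2 * L + 1). lra.
  replace (L * (2 * (e / (2 * L + 1))) * (2 * L + 1)) with (2 * L * e) by (field; lra). nra.
Qed.

Lemma open_abs d : open_R (fun t => Rabs t < d).
Proof. replace (fun t => Rabs t < d) with (fun t => Rabs (t - 0) < d). apply ball_open.
  extensionality t. rewrite Rminus_0_r. reflexivity. Qed.

Section Main.
Context {X : Type} (T : (X -> Prop) -> Prop) (HT : is_topology T) (Hhaus : hausdorff T)
  (zeta : (X -> R) -> R) (Hzeta : quasi_integral T zeta)
  (O : X -> Prop) (HO : T O) (HOc : compactT T (closureT T O)).

Definition K0 := closureT T O.

Definition lift (F : Ohat O -> R) (x : X) : R :=
  match excluded_middle_informative (O x) with
  | left H => F (Some (exist _ x H))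
  | right _ => 0 end.

Lemma lift_eq F x H : lift F x = F (Some (exist _ x H)).
Proof. unfold lift. destruct (excluded_middle_informative (O x)) as [H'|H'].
  rewrite (proof_irrelevance _ H' H). reflexivity. contradiction. Qed.
Lemma lift_out F x : ~ O x -> lift F x = 0.
Proof. unfold lift. destruct (excluded_middle_informative (O x)); tauto. Qed.
Lemma extend_lift F p : F None = 0 -> extend O (lift F) p = F p.
Proof. intros H0. destruct p as [[x H]|]; simpl. apply lift_eq. auto. Qed.

Lemma O_K0 x : O x -> K0 x.
Proof. intros Ox U _ Ux. exists x; auto. Qed.

Lemma Ccin_out g x : Cc_in T O g -> ~ O x -> g x = 0.
Proof. intros (_ & K & _ & HKO & Hs) Hx. apply Hs. intro; apply Hx; auto. Qed.

Lemma Ccin_K0 g : Cc_in T O g -> supported_in g K0.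
Proof. intros Hg x Hx. apply (Ccin_out g x Hg). intro; apply Hx, O_K0; auto. Qed.

Definition CK g := continuousT T open_R g /\ supported_in g K0.
Lemma CK_Cc g : CK g -> Cc T g.
Proof. intros [H1 H2]. split; auto. exists K0; auto. Qed.
Lemma Ccin_CK g : Cc_in T O g -> CK g.
Proof. intros Hg. split. apply Hg. apply Ccin_K0; auto. Qed.

Lemma Ccin_intro g K : continuousT T open_R g -> compactT T K -> (forall x, K x -> O x) ->
  supported_in g K -> Cc_in T O g.
Proof. intros. split. split; auto. exists K; auto. exists K; auto. Qed.

Lemma lift_Ccin F W : continuousT (ohat_open T O) open_R F -> F None = 0 ->
  ohat_open T O W -> W None -> (forall p, W p -> F p = 0) -> Cc_in T O (lift F).
Proof. intros HF HF0 HW WN HWF.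
  apply Ccin_intro with (K := fun x => exists h : O x, ~ W (Some (exist _ x h))).
  - intros V HV. destruct (classic (V 0)) as [V0|V0].
    + pose proof (proj2 (HF V HV)) as HC. simpl in HC. rewrite HF0 in HC. specialize (HC V0).
      pose proof (hc T HT Hhaus _ HC) as Hop.
      replace (fun x => V (lift F x)) with
        (fun x => ~ (exists h : O x, ~ V (F (Some (exist _ x h))))); auto.
      extensionality x. apply propositional_extensionality.
      destruct (classic (O x)) as [Ox|Ox].
      * rewrite (lift_eq F x Ox). split.
        -- intros Hn. apply NNPP. intro Hv. apply Hn. exists Ox; auto.
        -- intros Hv (h & Hh). rewrite (proof_irrelevance _ h Ox) in Hh. auto.
      * rewrite lift_out by auto. split; auto. intros _ (h & _). auto.
    + pose proof (proj1 (HF V HV)) as Hop. simpl in Hop.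
      replace (fun x => V (lift F x)) with
        (fun x => exists h : O x, V (F (Some (exist _ x h)))); auto.
      extensionality x. apply propositional_extensionality.
      destruct (classic (O x)) as [Ox|Ox].
      * rewrite (lift_eq F x Ox). split.
        -- intros (h & Hh). rewrite (proof_irrelevance _ h Ox) in Hh. auto.
        -- intros; exists Ox; auto.
      * rewrite lift_out by auto. split. intros (h & _). contradiction. intros; contradiction.
  - exact (proj2 HW WN).
  - intros x (h & _). auto.
  - intros x Hx. destruct (classic (O x)) as [Ox|Ox].
    + rewrite (lift_eq F x Ox). apply HWF. apply NNPP. intro. apply Hx. exists Ox; auto.
    + apply lift_out; auto.
Qed.

Lemma ohat_abs F d : continuousT (ohat_open T O) open_R F -> ohat_open T O (fun p => Rabs (F p) < d).
Proof. intros HF. apply (HF _ (open_abs d)). Qed.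


Context (N0 : R) (HN0 : 0 <= N0) (HL0 : forall f g, Cc T f -> Cc T g -> supported_in f K0 ->
  supported_in g K0 -> forall c, (forall x, Rabs (f x - g x) <= c) -> Rabs (zeta f - zeta g) <= N0 * c).

Definition close (g : X -> R) (F : Ohat O -> R) c := forall p, Rabs (extend O g p - F p) <= c.
Definition Approx F := forall d, d > 0 -> exists g, Cc_in T O g /\ close g F d.

Lemma lip_in g1 g2 F c1 c2 : Cc_in T O g1 -> Cc_in T O g2 -> close g1 F c1 -> close g2 F c2 ->
  Rabs (zeta g1 - zeta g2) <= N0 * (c1 + c2).
Proof. intros G1 G2 C1 C2. apply HL0; try apply G1; try apply G2; try apply Ccin_K0; auto.
  intros x. destruct (classic (O x)) as [Ox|Ox].
  - specialize (C1 (Some (exist _ x Ox))). specialize (C2 (Some (exist _ x Ox))). simpl in *.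
    revert C1 C2. generalize (g1 x) (g2 x) (F (Some (exist _ x Ox))). intros. rsplit.
  - rewrite (Ccin_out g1 x G1 Ox), (Ccin_out g2 x G2 Ox).
    specialize (C1 None). specialize (C2 None). simpl in *. revert C1 C2. generalize (F None). intros. rsplit.
Qed.

Lemma zeta0_spec F : Approx F -> forall g c, Cc_in T O g -> close g F c ->
  Rabs (zeta g - zeta0 T zeta O F) <= N0 * c.
Proof. intros HA.
  destruct (HA 1 Rlt_0_1) as (g0 & G0 & C0).
  set (E := fun r => exists g c, Cc_in T O g /\ close g F c /\ r = zeta g - N0 * c).
  destruct (completeness E) as (r0 & Hub & Hlub).
  { exists (zeta g0 + N0). intros r (g & c & G & C & ->).
    pose proof (lip_in g g0 F c 1 G G0 C C0). revert H. rsplit; nra. }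
  { exists (zeta g0 - N0 * 1). exists g0, 1. auto. }
  assert (Pr : forall g c, Cc_in T O g -> close g F c -> Rabs (zeta g - r0) <= N0 * c).
  { intros g c G C. assert (zeta g - N0 * c <= r0) by (apply Hub; exists g, c; auto).
    assert (r0 <= zeta g + N0 * c).
    { apply Hlub. intros r (g' & c' & G' & C' & ->). pose proof (lip_in g g' F c c' G G' C C').
      revert H0. rsplit; nra. }
    revert H H0. rsplit. }
  assert (Hsp : forall eps, eps > 0 -> exists delta, delta > 0 /\
    forall g, Cc_in T O g -> (forall p, Rabs (extend O g p - F p) <= delta) ->
      Rabs (zeta g - zeta0 T zeta O F) <= eps).
  { unfold zeta0. apply (epsilon_spec (inhabits 0) (fun r => forall eps, eps > 0 -> exists delta, delta > 0 /\
      forall g, Cc_in T O g -> (forall p, Rabs (extend O g p - F p) <= delta) -> Rabs (zeta g - r) <= eps)).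
    exists r0. intros eps Heps. exists (eps / (N0 + 1)). split. apply Rdiv_lt_0_compat; lra.
    intros g G C. eapply Rle_trans. apply (Pr g _ G C).
    apply Rmult_le_reg_r with (N0 + 1). lra.
    replace (N0 * (eps / (N0 + 1)) * (N0 + 1)) with (N0 * eps) by (field; lra). nra. }
  assert (E0 : zeta0 T zeta O F = r0).
  { assert (forall e, e > 0 -> Rabs (zeta0 T zeta O F - r0) <= 0 + (N0 + 1) * e).
    { intros e He. destruct (Hsp e He) as (dl & Hdl & Hg).
      destruct (HA (Rmin dl e)) as (g & G & C). apply Rmin_pos; lra.
      assert (Rmin dl e <= dl) by apply Rmin_l. assert (Rmin dl e <= e) by apply Rmin_r.
      assert (Rabs (zeta g - zeta0 T zeta O F) <= e).
      { apply Hg; auto. intros p. eapply Rle_trans. apply C. auto. }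
      pose proof (Pr g _ G C). assert (N0 * Rmin dl e <= N0 * e) by (apply Rmult_le_compat_l; lra).
      revert H1 H2 H3. rsplit. }
    pose proof (le_eps _ _ _ H). pose proof (Rabs_pos (zeta0 T zeta O F - r0)).
    assert (Rabs (zeta0 T zeta O F - r0) = 0) by lra. revert H2. rsplit. }
  rewrite E0. exact Pr.
Qed.

Lemma Approx_cont F : continuousT (ohat_open T O) open_R F -> F None = 0 -> Approx F.
Proof. intros HF HF0 d Hd. exists (lift (fun p => sig d (F p))). split.
  - apply lift_Ccin with (W := fun p => Rabs (F p) < d).
    + apply comp_cont with (TB := open_R); auto. apply lip_cont with 3. lra. intros; apply sig_lip; auto.
    + rewrite HF0. apply sig_zero; auto. rewrite Rabs_R0; lra.
    + apply ohat_abs; auto.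
    + rewrite HF0, Rabs_R0; auto.
    + intros p Hp. apply sig_zero; auto. lra.
  - intros p. rewrite extend_lift. apply sig_close; auto. rewrite HF0. apply sig_zero; auto. rewrite Rabs_R0; lra.
Qed.

Lemma zeta0_lip F1 F2 c : Approx F1 -> Approx F2 -> (forall p, Rabs (F1 p - F2 p) <= c) ->
  Rabs (zeta0 T zeta O F1 - zeta0 T zeta O F2) <= N0 * c.
Proof. intros A1 A2 H.
  assert (forall e, e > 0 -> Rabs (zeta0 T zeta O F1 - zeta0 T zeta O F2) <= N0 * c + (4 * N0) * e).
  { intros e He. destruct (A1 e He) as (g1 & G1 & C1). destruct (A2 e He) as (g2 & G2 & C2).
    pose proof (zeta0_spec F1 A1 g1 e G1 C1). pose proof (zeta0_spec F2 A2 g2 e G2 C2).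
    assert (C2' : close g2 F1 (e + c)).
    { intros p. specialize (C2 p). specialize (H p). revert C2 H. rsplit. }
    pose proof (lip_in g1 g2 F1 e (e + c) G1 G2 C1 C2'). revert H0 H1 H2. rsplit. }
  apply le_eps with (4 * N0). intros; apply H0; auto.
Qed.

Lemma Hmono : forall f g, Cc T f -> Cc T g -> (forall x, f x <= g x) -> zeta f <= zeta g.
Proof. apply Hzeta. Qed.
Lemma Hlin : forall f, Cc T f -> forall p q : R -> R,
     continuousT open_R open_R p -> continuousT open_R open_R q -> p 0 = 0 -> q 0 = 0 ->
     forall a b, zeta (fun x => a * p (f x) + b * q (f x)) =
                 a * zeta (fun x => p (f x)) + b * zeta (fun x => q (f x)).
Proof. apply Hzeta. Qed.

Lemma id_cont : continuousT open_R open_R (fun t => t).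
Proof. intros V HV. exact HV. Qed.

Lemma zeta_zero : zeta (fun _ => 0) = 0.
Proof.
  assert (Hc : Cc T (fun _ : X => 0)). { split. apply cont_const; auto. exists (fun _ => False). split.
    apply compact_empty. intros x _; auto. }
  pose proof (Hlin _ Hc (fun t => t) (fun t => t) id_cont id_cont eq_refl eq_refl 0 0). cbv beta in H.
  replace (fun _ : X => 0 * 0 + 0 * 0) with (fun _ : X => 0) in H by (extensionality x; ring).
  rewrite H. ring.
Qed.

Lemma CK_sum2 (k w : X -> R) (Phi : R -> R -> R) L : CK k -> CK w -> 0 <= L ->
  (forall a b a' b', Rabs (Phi a b - Phi a' b') <= L * (Rabs (a - a') + Rabs (b - b'))) ->
  Phi 0 0 = 0 -> CK (fun x => Phi (k x) (w x)).
Proof. intros [Hk Sk] [Hw Sw] HL HP H0. split. apply cont2 with L; auto.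
  intros x Hx. rewrite Sk, Sw; auto. Qed.

Lemma CK_comp (k : X -> R) (p : R -> R) : CK k -> continuousT open_R open_R p -> p 0 = 0 ->
  CK (fun x => p (k x)).
Proof. intros [Hk Sk] Hp H0. split. apply comp_cont with (TB := open_R); auto.
  intros x Hx. rewrite Sk; auto. Qed.

Lemma addL (k w : X -> R) d : CK k -> CK w -> (forall x, 0 <= w x <= 1) ->
  (forall x, k x <> 0 -> w x = 1) -> 0 <= d ->
  zeta (fun x => k x + d * w x) = zeta k + d * zeta w.
Proof. intros Hk Hw Hw01 Hw1 Hd.
  assert (posc : continuousT open_R open_R rpos) by (apply lip_cont with 1; [lra| apply rpos_lip]).
  assert (negc : continuousT open_R open_R rneg) by (apply lip_cont with 1; [lra| apply rneg_lip]).
  assert (S1 : zeta k = zeta (fun x => rpos (k x)) - zeta (fun x => rneg (k x))).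
  { pose proof (Hlin k (CK_Cc _ Hk) rpos rneg posc negc) as H.
    transitivity (zeta (fun x => 1 * rpos (k x) + -1 * rneg (k x))).
    - f_equal. extensionality x. unfold rpos, rneg. rsplit.
    - rewrite (H ltac:(unfold rpos; rsplit) ltac:(unfold rneg; rsplit) 1 (-1)). ring. }
  set (G1 := fun x => k x + d * w x).
  assert (HG1 : CK G1).
  { apply (CK_sum2 k w (fun a b => a + d * b) (1 + Rabs d)); auto.
    - pose proof (Rabs_pos d); lra.
    - intros a b a' b'. replace (a + d * b - (a' + d * b')) with ((a - a') + d * (b - b')) by ring.
      eapply Rle_trans. apply Rabs_triang. rewrite Rabs_mult.
      pose proof (Rabs_pos (a - a')). pose proof (Rabs_pos (b - b')). pose proof (Rabs_pos d). nra.
    - ring. }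
  assert (p1c : continuousT open_R open_R (fun t => rpos (t - d))).
  { apply lip_cont with 1. lra. intros a b. eapply Rle_trans. apply rpos_lip.
    replace (a - d - (b - d)) with (a - b) by ring. lra. }
  assert (q1c : continuousT open_R open_R (fun t => Rmin t d)).
  { apply lip_cont with 1. lra. intros a b. rsplit. }
  pose proof (Hlin G1 (CK_Cc _ HG1) _ _ p1c q1c ltac:(unfold rpos; rsplit) ltac:(rsplit) 1 1) as E1. cbv beta in E1.
  replace (fun x => 1 * rpos (G1 x - d) + 1 * Rmin (G1 x) d) with G1 in E1
    by (extensionality x; unfold rpos; rsplit).
  replace (fun x => rpos (G1 x - d)) with (fun x => rpos (k x)) in E1.
  2:{ extensionality x. unfold G1. destruct (Rle_dec (k x) 0).
      - pose proof (Hw01 x). unfold rpos. assert (d * w x <= d) by nra. rsplit.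
      - rewrite (Hw1 x) by lra. unfold rpos. rsplit. }
  replace (fun x => Rmin (G1 x) d) with (fun x => d * w x - rneg (k x)) in E1.
  2:{ extensionality x. unfold G1. destruct (Rle_dec (k x) 0).
      - pose proof (Hw01 x). unfold rneg. assert (d * w x <= d) by nra. rsplit.
      - rewrite (Hw1 x) by lra. unfold rneg. rsplit. }
  set (G2 := fun x => rneg (k x) + w x).
  assert (HG2 : CK G2).
  { apply (CK_sum2 (fun x => rneg (k x)) w (fun a b => a + b) 1); auto.
    - apply CK_comp; auto. unfold rneg; rsplit.
    - lra.
    - intros. replace (a + b - (a' + b')) with ((a - a') + (b - b')) by ring.
      eapply Rle_trans. apply Rabs_triang. lra.
    - ring. }
  assert (p2c : continuousT open_R open_R (fun t => rpos (t - 1))).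
  { apply lip_cont with 1. lra. intros a b. eapply Rle_trans. apply rpos_lip.
    replace (a - 1 - (b - 1)) with (a - b) by ring. lra. }
  assert (q2c : continuousT open_R open_R (fun t => Rmin t 1)).
  { apply lip_cont with 1. lra. intros a b. rsplit. }
  pose proof (Hlin G2 (CK_Cc _ HG2) _ _ p2c q2c ltac:(unfold rpos; rsplit) ltac:(rsplit) (-1) d) as E2. cbv beta in E2.
  replace (fun x => -1 * rpos (G2 x - 1) + d * Rmin (G2 x) 1) with (fun x => d * w x - rneg (k x)) in E2.
  2:{ extensionality x. unfold G2. pose proof (Hw01 x). destruct (Rle_dec 0 (k x)).
      - unfold rpos, rneg. rsplit.
      - rewrite (Hw1 x) by lra. unfold rpos, rneg. rsplit. }
  replace (fun x => rpos (G2 x - 1)) with (fun x => rneg (k x)) in E2.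
  2:{ extensionality x. unfold G2. pose proof (Hw01 x). destruct (Rle_dec 0 (k x)).
      - unfold rpos, rneg. rsplit.
      - rewrite (Hw1 x) by lra. unfold rpos, rneg. rsplit. }
  replace (fun x => Rmin (G2 x) 1) with w in E2.
  2:{ extensionality x. unfold G2. pose proof (Hw01 x). destruct (Rle_dec 0 (k x)).
      - unfold rneg. rsplit.
      - rewrite (Hw1 x) by lra. unfold rneg. rsplit. }
  unfold G1 in *. rewrite E1, E2, S1. ring.
Qed.

Lemma CK_zero : CK (fun _ => 0).
Proof. split. apply cont_const; auto. intros x _; auto. Qed.

Lemma Ccin_zero : Cc_in T O (fun _ => 0).
Proof. apply Ccin_intro with (fun _ => False). apply cont_const; auto. apply compact_empty.
  intros x []. intros x _; auto. Qed.

Definition LSet := fun r => exists g, Cc_in T O g /\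
     (forall x, O x -> g x <= 1) /\ (forall x, ~ O x -> g x <= 0) /\ r = zeta g.

Lemma lambda_lub : is_lub LSet (lambdaO T zeta O).
Proof. unfold lambdaO. apply epsilon_spec.
  destruct (completeness LSet) as (m & Hm).
  - exists N0. intros r (g & G & G1 & G0 & ->).
    assert (CKp : CK (fun x => rpos (g x))).
    { apply CK_comp. apply Ccin_CK; auto. apply lip_cont with 1. lra. apply rpos_lip. unfold rpos; rsplit. }
    apply Rle_trans with (zeta (fun x => rpos (g x))).
    + apply Hmono. apply G. apply CK_Cc; auto. intros; unfold rpos; rsplit.
    + pose proof (HL0 _ _ (CK_Cc _ CKp) (CK_Cc _ CK_zero) (proj2 CKp) (proj2 CK_zero) 1) as H.
      rewrite zeta_zero in H. assert (Rabs (zeta (fun x => rpos (g x)) - 0) <= N0 * 1).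
      { apply H. intros x. destruct (classic (O x)) as [Ox|Ox].
        - specialize (G1 x Ox). unfold rpos. rsplit.
        - specialize (G0 x Ox). unfold rpos. rsplit. }
      revert H0. rsplit.
  - exists (zeta (fun _ => 0)). exists (fun _ => 0). split. apply Ccin_zero. split. intros; lra. split; intros; lra.
  - exists m; auto.
Qed.

Lemma lambda_ub w : Cc_in T O w -> (forall x, O x -> w x <= 1) -> (forall x, ~ O x -> w x <= 0) ->
  zeta w <= lambdaO T zeta O.
Proof. intros. apply lambda_lub. exists w; auto. Qed.

Lemma lambda_nonneg : 0 <= lambdaO T zeta O.
Proof. rewrite <- zeta_zero. apply lambda_ub. apply Ccin_zero. intros; lra. intros; lra. Qed.

Lemma mono0 h k d : continuousT (ohat_open T O) open_R h -> continuousT (ohat_open T O) open_R k ->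
  h None = 0 -> k None = 0 -> 0 <= d -> (forall p, h p <= k p + d) ->
  zeta0 T zeta O h <= zeta0 T zeta O k + lambdaO T zeta O * d.
Proof. intros Hh Hk h0 k0 Hd Hhk.
  apply le_eps with (8 * N0). intros dl Hdl.
  assert (sigc : continuousT open_R open_R (sig (2 * dl))).
  { apply lip_cont with 3. lra. intros; apply sig_lip; lra. }
  assert (thc : continuousT open_R open_R (theta dl)).
  { apply lip_cont with (/ dl). left; apply Rinv_0_lt_compat; lra. intros; apply theta_lip; lra. }
  set (h' := lift (fun p => sig (2*dl) (h p))).
  set (k' := lift (fun p => sig (2*dl) (k p))).
  assert (Ch : Cc_in T O h').
  { apply lift_Ccin with (W := fun p => Rabs (h p) < 2 * dl).
    apply comp_cont with (TB := open_R); auto. rewrite h0. apply sig_zero; [lra|rewrite Rabs_R0; lra].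
    apply ohat_abs; auto. rewrite h0, Rabs_R0; lra. intros p Hp. apply sig_zero; lra. }
  assert (Ck : Cc_in T O k').
  { apply lift_Ccin with (W := fun p => Rabs (k p) < 2 * dl).
    apply comp_cont with (TB := open_R); auto. rewrite k0. apply sig_zero; [lra|rewrite Rabs_R0; lra].
    apply ohat_abs; auto. rewrite k0, Rabs_R0; lra. intros p Hp. apply sig_zero; lra. }
  assert (Clh : close h' h (2 * dl)).
  { intros p. unfold h'. rewrite extend_lift. apply sig_close; lra.
    rewrite h0. apply sig_zero; [lra|rewrite Rabs_R0; lra]. }
  assert (Clk : close k' k (2 * dl)).
  { intros p. unfold k'. rewrite extend_lift. apply sig_close; lra.
    rewrite k0. apply sig_zero; [lra|rewrite Rabs_R0; lra]. }
  set (wh := lift (fun p => theta dl (h p))).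
  set (wk := lift (fun p => theta dl (k p))).
  assert (Cwh : Cc_in T O wh).
  { apply lift_Ccin with (W := fun p => Rabs (h p) < dl).
    apply comp_cont with (TB := open_R); auto. rewrite h0. apply theta_zero; [lra|rewrite Rabs_R0; lra].
    apply ohat_abs; auto. rewrite h0, Rabs_R0; lra. intros p Hp. apply theta_zero; lra. }
  assert (Cwk : Cc_in T O wk).
  { apply lift_Ccin with (W := fun p => Rabs (k p) < dl).
    apply comp_cont with (TB := open_R); auto. rewrite k0. apply theta_zero; [lra|rewrite Rabs_R0; lra].
    apply ohat_abs; auto. rewrite k0, Rabs_R0; lra. intros p Hp. apply theta_zero; lra. }
  set (w := fun x => Rmax (wh x) (wk x)).
  assert (Cw : Cc_in T O w).
  { destruct Cwh as ((Hc1 & _) & K1 & HK1 & HK1O & HS1).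
    destruct Cwk as ((Hc2 & _) & K2 & HK2 & HK2O & HS2).
    apply Ccin_intro with (fun x => K1 x \/ K2 x).
    - apply cont2 with 1; auto. lra. intros; rsplit.
    - apply compact_union; auto.
    - intros x [H|H]; auto.
    - intros x Hx. unfold w. rewrite HS1, HS2 by tauto. rsplit. }
  assert (Hwval : forall x (Ox : O x), w x = Rmax (theta dl (h (Some (exist _ x Ox)))) (theta dl (k (Some (exist _ x Ox))))).
  { intros. unfold w, wh, wk. rewrite !(lift_eq _ x Ox). auto. }
  assert (Hwout : forall x, ~ O x -> w x = 0).
  { intros. unfold w, wh, wk. rewrite !lift_out by auto. rsplit. }
  assert (Hw01 : forall x, 0 <= w x <= 1).
  { intros x. destruct (classic (O x)) as [Ox|Ox].
    - rewrite (Hwval x Ox). generalize (theta_bounds dl (h (Some (exist _ x Ox)))) (theta_bounds dl (k (Some (exist _ x Ox)))).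
      intros; rsplit.
    - rewrite Hwout; auto; lra. }
  assert (Hlam : zeta w <= lambdaO T zeta O).
  { apply lambda_ub; auto. intros; apply Hw01. intros; rewrite Hwout; auto; lra. }
  assert (Hw1 : forall x, k' x <> 0 -> w x = 1).
  { intros x Hx. destruct (classic (O x)) as [Ox|Ox].
    - unfold k' in Hx. rewrite (lift_eq _ x Ox) in Hx. rewrite (Hwval x Ox).
      destruct (Rle_dec (Rabs (k (Some (exist _ x Ox)))) (2 * dl)).
      + exfalso. apply Hx. apply sig_zero; lra.
      + rewrite (theta_one dl (k _)) by lra.
        generalize (theta_bounds dl (h (Some (exist _ x Ox)))). intros; rsplit.
    - exfalso. apply Hx. unfold k'. apply lift_out; auto. }
  pose proof (addL k' w d (Ccin_CK _ Ck) (Ccin_CK _ Cw) Hw01 Hw1 Hd) as EA.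
  set (G := fun x => k' x + d * w x).
  assert (CG : CK G).
  { apply (CK_sum2 k' w (fun a b => a + d * b) (1 + Rabs d)); auto.
    apply Ccin_CK; auto. apply Ccin_CK; auto.
    - pose proof (Rabs_pos d); lra.
    - intros a b a' b'. replace (a + d * b - (a' + d * b')) with ((a - a') + d * (b - b')) by ring.
      eapply Rle_trans. apply Rabs_triang. rewrite Rabs_mult.
      pose proof (Rabs_pos (a - a')). pose proof (Rabs_pos (b - b')). pose proof (Rabs_pos d). nra.
    - ring. }
  set (m := fun x => Rmin (h' x) (G x)).
  assert (Cm : CK m).
  { apply (CK_sum2 h' G Rmin 1); auto. apply Ccin_CK; auto. lra. intros; rsplit. rsplit. }
  assert (Hpt : forall x, h' x <= G x + 4 * dl).
  { intros x. unfold G. destruct (classic (O x)) as [Ox|Ox].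
    - rewrite (Hwval x Ox). unfold h', k'. rewrite !(lift_eq _ x Ox). apply key_mono; auto.
    - rewrite Hwout by auto. unfold h', k'. rewrite !lift_out by auto. lra. }
  assert (E1 : Rabs (zeta h' - zeta m) <= N0 * (4 * dl)).
  { apply HL0. apply Ch. apply CK_Cc; auto. apply Ccin_K0; auto. apply Cm.
    intros x. specialize (Hpt x). unfold m. revert Hpt. generalize (h' x) (G x). intros. rsplit. }
  assert (E2 : zeta m <= zeta G).
  { apply Hmono; try apply CK_Cc; auto. intros x. unfold m. apply Rmin_r. }
  assert (E3 : Rabs (zeta h' - zeta0 T zeta O h) <= N0 * (2 * dl)).
  { apply zeta0_spec; auto. apply Approx_cont; auto. }
  assert (E4 : Rabs (zeta k' - zeta0 T zeta O k) <= N0 * (2 * dl)).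
  { apply zeta0_spec; auto. apply Approx_cont; auto. }
  assert (E5 : d * zeta w <= d * lambdaO T zeta O) by (apply Rmult_le_compat_l; auto).
  unfold G in E2. rewrite EA in E2.
  revert E1 E2 E3 E4 E5. generalize (zeta h') (zeta m) (zeta k') (zeta w) (zeta0 T zeta O h) (zeta0 T zeta O k).
  intros. rsplit.
Qed.

Lemma cont_at0 (psi : R -> R) : continuousT open_R open_R psi -> psi 0 = 0 ->
  forall eps, eps > 0 -> exists eta, eta > 0 /\ forall dl, 0 < dl <= eta ->
    forall t, Rabs (psi (sig dl t) - psi t) <= eps.
Proof. intros Hp H0 eps Heps.
  destruct (Hp _ (open_abs (eps / 2)) 0) as (e & He & Hb). simpl. rewrite H0, Rabs_R0; lra.
  exists (e / 3). split. lra. intros dl Hdl t.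
  destruct (Rle_dec (2 * dl) (Rabs t)).
  - rewrite sig_id by lra. replace (psi t - psi t) with 0 by ring. rewrite Rabs_R0; lra.
  - pose proof (sig_abs dl t ltac:(lra)).
    assert (A1 : Rabs (psi t) < eps / 2) by (apply Hb; rewrite Rminus_0_r; lra).
    assert (A2 : Rabs (psi (sig dl t)) < eps / 2) by (apply Hb; rewrite Rminus_0_r; lra).
    revert A1 A2. generalize (psi t) (psi (sig dl t)). intros. rsplit.
Qed.

Lemma Ccin_comp G psi : Cc_in T O G -> continuousT open_R open_R psi -> psi 0 = 0 ->
  Cc_in T O (fun x => psi (G x)).
Proof. intros ((Hc & _) & K & HK & HKO & HS) Hp H0. apply Ccin_intro with K; auto.
  apply comp_cont with (TB := open_R); auto. intros x Hx. rewrite HS; auto. Qed.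

Lemma Ccin_lin g1 g2 a b : Cc_in T O g1 -> Cc_in T O g2 -> Cc_in T O (fun x => a * g1 x + b * g2 x).
Proof. intros ((Hc1 & _) & K1 & HK1 & HK1O & HS1) ((Hc2 & _) & K2 & HK2 & HK2O & HS2).
  apply Ccin_intro with (fun x => K1 x \/ K2 x).
  - apply (cont2 T HT g1 g2 (fun u v => a * u + b * v) (Rabs a + Rabs b)); auto.
    pose proof (Rabs_pos a); pose proof (Rabs_pos b); lra.
    intros u v u' v'. replace (a * u + b * v - (a * u' + b * v')) with (a * (u - u') + b * (v - v')) by ring.
    eapply Rle_trans. apply Rabs_triang. rewrite !Rabs_mult.
    pose proof (Rabs_pos a); pose proof (Rabs_pos b); pose proof (Rabs_pos (u - u')); pose proof (Rabs_pos (v - v')). nra.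
  - apply compact_union; auto.
  - intros x [H|H]; auto.
  - intros x Hx. rewrite HS1, HS2 by tauto. ring.
Qed.

Lemma extend_comp G psi p : psi 0 = 0 -> extend O (fun x => psi (G x)) p = psi (extend O G p).
Proof. intros. destruct p; simpl; auto. Qed.

Lemma lin0 h (psi1 psi2 : R -> R) a b : continuousT (ohat_open T O) open_R h -> h None = 0 ->
  continuousT open_R open_R psi1 -> continuousT open_R open_R psi2 -> psi1 0 = 0 -> psi2 0 = 0 ->
  zeta0 T zeta O (fun p => a * psi1 (h p) + b * psi2 (h p)) =
  a * zeta0 T zeta O (fun p => psi1 (h p)) + b * zeta0 T zeta O (fun p => psi2 (h p)).
Proof. intros Hh h0 Hp1 Hp2 H1 H2.
  set (F := fun p => a * psi1 (h p) + b * psi2 (h p)).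
  set (F1 := fun p => psi1 (h p)). set (F2 := fun p => psi2 (h p)).
  set (Cab := Rabs a + Rabs b).
  assert (HCab : 0 <= Cab) by (unfold Cab; pose proof (Rabs_pos a); pose proof (Rabs_pos b); lra).
  assert (constr : forall eps, eps > 0 -> exists G, Cc_in T O G /\
     close (fun x => psi1 (G x)) F1 eps /\ close (fun x => psi2 (G x)) F2 eps /\
     close (fun x => a * psi1 (G x) + b * psi2 (G x)) F (Cab * eps)).
  { intros eps Heps.
    destruct (cont_at0 psi1 Hp1 H1 eps Heps) as (e1 & He1 & Hc1).
    destruct (cont_at0 psi2 Hp2 H2 eps Heps) as (e2 & He2 & Hc2).
    set (dl := Rmin e1 e2). assert (0 < dl) by (apply Rmin_pos; lra).
    assert (dl <= e1) by apply Rmin_l. assert (dl <= e2) by apply Rmin_r.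
    exists (lift (fun p => sig dl (h p))).
    assert (Hext : forall p, extend O (lift (fun p => sig dl (h p))) p = sig dl (h p)).
    { intros p. apply extend_lift. rewrite h0. apply sig_zero; [lra|rewrite Rabs_R0; lra]. }
    split; [|split; [|split]].
    - apply lift_Ccin with (W := fun p => Rabs (h p) < dl).
      apply comp_cont with (TB := open_R); auto. apply lip_cont with 3. lra. intros; apply sig_lip; lra.
      rewrite h0. apply sig_zero; [lra|rewrite Rabs_R0; lra].
      apply ohat_abs; auto. rewrite h0, Rabs_R0; lra. intros p Hp. apply sig_zero; lra.
    - intros p. rewrite extend_comp, Hext by auto. apply Hc1. lra.
    - intros p. rewrite extend_comp, Hext by auto. apply Hc2. lra.
    - intros p. assert (E : extend O (fun x => a * psi1 (lift (fun p => sig dl (h p)) x) + b * psi2 (lift (fun p => sig dl (h p)) x)) p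
         = a * psi1 (sig dl (h p)) + b * psi2 (sig dl (h p))).
      { rewrite <- !Hext. destruct p; simpl; auto. rewrite H1, H2. ring. }
      rewrite E. unfold F. specialize (Hc1 dl ltac:(lra) (h p)). specialize (Hc2 dl ltac:(lra) (h p)).
      replace (a * psi1 (sig dl (h p)) + b * psi2 (sig dl (h p)) - (a * psi1 (h p) + b * psi2 (h p)))
        with (a * (psi1 (sig dl (h p)) - psi1 (h p)) + b * (psi2 (sig dl (h p)) - psi2 (h p))) by ring.
      eapply Rle_trans. apply Rabs_triang. rewrite !Rabs_mult. unfold Cab.
      pose proof (Rabs_pos a); pose proof (Rabs_pos b). nra. }
  assert (AF : Approx F).
  { intros d Hd. destruct (constr (d / (Cab + 1))) as (G & CG & _ & _ & C).
    apply Rdiv_lt_0_compat; lra.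
    exists (fun x => a * psi1 (G x) + b * psi2 (G x)). split.
    apply Ccin_lin; apply Ccin_comp; auto.
    intros p. eapply Rle_trans. apply C.
    apply Rmult_le_reg_r with (Cab + 1). lra.
    replace (Cab * (d / (Cab + 1)) * (Cab + 1)) with (Cab * d) by (field; lra). nra. }
  assert (AF1 : Approx F1).
  { apply Approx_cont; unfold F1; [apply comp_cont with (TB := open_R) (f := h); auto | rewrite h0; auto]. }
  assert (AF2 : Approx F2).
  { apply Approx_cont; unfold F2; [apply comp_cont with (TB := open_R) (f := h); auto | rewrite h0; auto]. }
  assert (forall e, e > 0 -> Rabs (zeta0 T zeta O F - (a * zeta0 T zeta O F1 + b * zeta0 T zeta O F2)) <= 0 + (2 * N0 * Cab) * e).
  { intros e He. destruct (constr e He) as (G & CG & C1 & C2 & C).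
    pose proof (zeta0_spec F AF _ _ (Ccin_lin _ _ a b (Ccin_comp G psi1 CG Hp1 H1) (Ccin_comp G psi2 CG Hp2 H2)) C) as Z.
    pose proof (zeta0_spec F1 AF1 _ _ (Ccin_comp G psi1 CG Hp1 H1) C1) as Z1.
    pose proof (zeta0_spec F2 AF2 _ _ (Ccin_comp G psi2 CG Hp2 H2) C2) as Z2.
    cbv beta in Z. rewrite (Hlin G (proj1 CG) psi1 psi2 Hp1 Hp2 H1 H2 a b) in Z.
    revert Z Z1 Z2. generalize (zeta (fun x => psi1 (G x))) (zeta (fun x => psi2 (G x)))
      (zeta0 T zeta O F) (zeta0 T zeta O F1) (zeta0 T zeta O F2). intros r1 r2 z z1 z2 Z Z1 Z2.
    assert (Rabs (a * (r1 - z1)) <= Rabs a * (N0 * e)).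
    { rewrite Rabs_mult. apply Rmult_le_compat_l. apply Rabs_pos. auto. }
    assert (Rabs (b * (r2 - z2)) <= Rabs b * (N0 * e)).
    { rewrite Rabs_mult. apply Rmult_le_compat_l. apply Rabs_pos. auto. }
    replace (z - (a * z1 + b * z2)) with ((z - (a * r1 + b * r2)) + a * (r1 - z1) + b * (r2 - z2)) by ring.
    eapply Rle_trans. apply Rabs_triang. eapply Rle_trans. apply Rplus_le_compat_r. apply Rabs_triang.
    rewrite Rabs_minus_sym in Z. unfold Cab in *. nra. }
  assert (Rabs (zeta0 T zeta O F - (a * zeta0 T zeta O F1 + b * zeta0 T zeta O F2)) <= 0) by (apply le_eps with (2 * N0 * Cab); auto).
  change (zeta0 T zeta O F = a * zeta0 T zeta O F1 + b * zeta0 T zeta O F2). revert H0.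
  unfold Rabs. destruct (Rcase_abs _); intros; lra.
Qed.

Lemma shift_cont F c : continuousT (ohat_open T O) open_R F ->
  continuousT (ohat_open T O) open_R (fun p => F p - c).
Proof. intros HF. apply comp_cont with (TB := open_R) (f := F) (g := fun t => t - c); auto.
  apply lip_cont with 1. lra. intros a b. replace (a - c - (b - c)) with (a - b) by ring. lra. Qed.

Lemma zh_mono f g : continuousT (ohat_open T O) open_R f -> continuousT (ohat_open T O) open_R g ->
  (forall p, f p <= g p) -> zeta_hat T zeta O f <= zeta_hat T zeta O g.
Proof. intros Hf Hg Hfg. unfold zeta_hat.
  pose proof (Hfg None).
  pose proof (mono0 (fun p => f p - f None) (fun p => g p - g None) (g None - f None)
    (shift_cont f _ Hf) (shift_cont g _ Hg) ltac:(cbv beta; ring) ltac:(cbv beta; ring) ltac:(lra)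
    ltac:(intros p; specialize (Hfg p); lra)).
  replace (lambdaO T zeta O * g None) with (lambdaO T zeta O * f None + lambdaO T zeta O * (g None - f None)) by ring.
  lra.
Qed.

Lemma zh_lip f g c : continuousT (ohat_open T O) open_R f -> continuousT (ohat_open T O) open_R g ->
  (forall p, Rabs (f p - g p) <= c) ->
  Rabs (zeta_hat T zeta O f - zeta_hat T zeta O g) <= (2 * N0 + lambdaO T zeta O) * c.
Proof. intros Hf Hg Hc. unfold zeta_hat.
  pose proof (zeta0_lip (fun p => f p - f None) (fun p => g p - g None) (2 * c)
    (Approx_cont _ (shift_cont f _ Hf) ltac:(cbv beta; ring)) (Approx_cont _ (shift_cont g _ Hg) ltac:(cbv beta; ring))
    ltac:(intros p; cbv beta; pose proof (Hc p); pose proof (Hc None);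
          revert H H0; generalize (f p) (g p) (f None) (g None); intros; rsplit)) as Z.
  pose proof (Hc None) as HN. pose proof lambda_nonneg as Hl.
  assert (Rabs (lambdaO T zeta O * f None - lambdaO T zeta O * g None) <= lambdaO T zeta O * c).
  { rewrite <- Rmult_minus_distr_l, Rabs_mult, (Rabs_right _ (Rle_ge _ _ Hl)).
    apply Rmult_le_compat_l; auto. }
  revert Z H. generalize (zeta0 T zeta O (fun p => f p - f None)) (zeta0 T zeta O (fun p => g p - g None))
    (lambdaO T zeta O * f None) (lambdaO T zeta O * g None). intros. rsplit.
Qed.

Lemma zh_lin f (phi psi : R -> R) a b : continuousT (ohat_open T O) open_R f ->
  continuousT open_R open_R phi -> continuousT open_R open_R psi ->
  zeta_hat T zeta O (fun p => a * phi (f p) + b * psi (f p)) =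
  a * zeta_hat T zeta O (fun p => phi (f p)) + b * zeta_hat T zeta O (fun p => psi (f p)).
Proof. intros Hf Hphi Hpsi. unfold zeta_hat. set (c := f None).
  set (h := fun p => f p - c).
  assert (shc : forall (q : R -> R), continuousT open_R open_R q ->
     continuousT open_R open_R (fun t => q (t + c) - q c)).
  { intros q Hq. apply comp_cont with (TB := open_R) (f := fun t => q (t + c)) (g := fun s => s - q c).
    apply comp_cont with (TB := open_R) (f := fun t => t + c); auto.
    apply lip_cont with 1. lra. intros x y. replace (x + c - (y + c)) with (x - y) by ring. lra.
    apply lip_cont with 1. lra. intros x y. replace (x - q c - (y - q c)) with (x - y) by ring. lra. }
  pose proof (lin0 h (fun t => phi (t + c) - phi c) (fun t => psi (t + c) - psi c) a b
    (shift_cont f c Hf) ltac:(unfold h, c; ring) (shc phi Hphi) (shc psi Hpsi)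
    ltac:(cbv beta; rewrite Rplus_0_l; ring) ltac:(cbv beta; rewrite Rplus_0_l; ring)) as E. cbv beta in E.
  assert (Hfp : forall p, h p + c = f p) by (intros; unfold h; ring).
  replace (fun p => a * phi (f p) + b * psi (f p) - (a * phi c + b * psi c))
    with (fun p => a * (phi (h p + c) - phi c) + b * (psi (h p + c) - psi c)).
  2:{ extensionality p. rewrite Hfp. fold c. ring. }
  replace (fun p => phi (f p) - phi c) with (fun p => phi (h p + c) - phi c).
  2:{ extensionality p. rewrite Hfp. fold c. ring. }
  replace (fun p => psi (f p) - psi c) with (fun p => psi (h p + c) - psi c).
  2:{ extensionality p. rewrite Hfp. fold c. ring. }
  rewrite E. ring.
Qed.
End Main.

Theorem lemma2p3 (X : Type) (T : (X -> Prop) -> Prop)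
  (HT : is_topology T) (Hhaus : hausdorff T) (Hlc : locally_compact T)
  (zeta : (X -> R) -> R) (Hzeta : quasi_integral T zeta)
  (O : X -> Prop) (HO : T O) (HOc : compactT T (closureT T O)) :
  quasi_integral (ohat_open T O) (zeta_hat T zeta O) /\
  (forall f g : Ohat O -> R,
     continuousT (ohat_open T O) open_R f -> continuousT (ohat_open T O) open_R g ->
     (forall p, f p <= g p) -> zeta_hat T zeta O f <= zeta_hat T zeta O g) /\
  (exists N, 0 <= N /\ forall f g : Ohat O -> R,
     continuousT (ohat_open T O) open_R f -> continuousT (ohat_open T O) open_R g ->
     forall c, (forall p, Rabs (f p - g p) <= c) ->
     Rabs (zeta_hat T zeta O f - zeta_hat T zeta O g) <= N * c) /\
  (forall f : Ohat O -> R, continuousT (ohat_open T O) open_R f ->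
     forall phi psi : R -> R, continuousT open_R open_R phi -> continuousT open_R open_R psi ->
     forall a b,
       zeta_hat T zeta O (fun p => a * phi (f p) + b * psi (f p)) =
       a * zeta_hat T zeta O (fun p => phi (f p)) + b * zeta_hat T zeta O (fun p => psi (f p))).
Proof.
  destruct (proj1 (proj2 Hzeta) (closureT T O) HOc) as (N0 & HN0 & HL0).
  assert (M : forall f g, continuousT (ohat_open T O) open_R f -> continuousT (ohat_open T O) open_R g ->
     (forall p, f p <= g p) -> zeta_hat T zeta O f <= zeta_hat T zeta O g).
  { intros. eapply zh_mono; eauto. }
  assert (L : forall f g : Ohat O -> R,
     continuousT (ohat_open T O) open_R f -> continuousT (ohat_open T O) open_R g ->
     forall c, (forall p, Rabs (f p - g p) <= c) ->
     Rabs (zeta_hat T zeta O f - zeta_hat T zeta O g) <= (2 * N0 + lambdaO T zeta O) * c).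
  { intros. eapply zh_lip; eauto. }
  assert (Lin : forall f : Ohat O -> R, continuousT (ohat_open T O) open_R f ->
     forall phi psi : R -> R, continuousT open_R open_R phi -> continuousT open_R open_R psi ->
     forall a b,
       zeta_hat T zeta O (fun p => a * phi (f p) + b * psi (f p)) =
       a * zeta_hat T zeta O (fun p => phi (f p)) + b * zeta_hat T zeta O (fun p => psi (f p))).
  { intros. eapply zh_lin; eauto. }
  assert (HN : 0 <= 2 * N0 + lambdaO T zeta O).
  { assert (0 <= lambdaO T zeta O) by (eapply lambda_nonneg; eauto). lra. }
  split; [|split; [|split]]; auto.
  - split; [|split].
    + intros f g Hf Hg. apply M; apply Hf || apply Hg.
    + intros K _. exists (2 * N0 + lambdaO T zeta O). split; auto.
      intros f g Hf Hg _ _. apply L. apply Hf. apply Hg.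
    + intros f Hf p q Hp Hq _ _. apply Lin; auto. apply Hf.
  - exists (2 * N0 + lambdaO T zeta O). auto.
Qed.
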